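(* Let $p$ be a prime with $\frac12 n<p\le n-3$, let $\pi\in A_n$ have a cycle of length $p$ in its disjoint cycle decomposition, and let $C$ be a conjugacy class of $S_n$. Then \begin{align*} \#\{\sigma\in A_n:~[\pi,\sigma]\in C \text{ and } \langle\pi,\sigma\rangle=A_n\} =\;&\#\{\sigma\in A_n:~[\pi,\sigma]\in C\}\\ &-\#\{\sigma\in A_n:~[\pi,\sigma]\in C \text{ and } \langle\pi,\sigma\rangle\text{ is not transitive on }\{1,\dots,n\}\}. \end{align*}
   Context: $[\pi,\sigma]=\pi^{-1}\sigma^{-1}\pi\sigma$. *)

(* Defs.v *)
From mathcomp Require Import all_boot all_fingroup all_solvable.
Set Implicit Arguments. Unset Strict Implicit. Unset Printing Implicit Defensive.

(* Main.v *)
Require Import Defs.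
From mathcomp Require Import all_boot all_fingroup all_solvable.
From mathcomp Require Import zify.
Set Implicit Arguments. Unset Strict Implicit. Unset Printing Implicit Defensive.
Local Open Scope group_scope.

Section Gen.
Variable T : finType.
Implicit Types (s : {perm T}) (u v : T).

Lemma actPE (x : T) (a : {perm T}) : 'P%act x a = a x.
Proof. by []. Qed.

Lemma fixX s u q : s u = u -> (s ^+ q) u = u.
Proof. by move=> su; rewrite permX; elim: q => //= q ->. Qed.

Lemma ORB s x m : (s ^+ m) x = x -> (#|porbit s x| %| m)%N.
Proof.
move=> sm; set l := #|porbit s x|.
have l0 : (0 < l)%N by rewrite lt0n card_porbit_neq0.
have sl : (s ^+ l) x = x by rewrite permX iter_porbit.
have : (s ^+ (m %% l)) x = x.
  move: sm; rewrite {1}(divn_eq m l) expgD permM mulnC expgM.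
  by rewrite (fixX _ sl).
move=> sr; rewrite /dvdn; apply/eqP.
have rl : (m %% l < l)%N by rewrite ltn_mod.
have U := uniq_traject_porbit s x; rewrite -/l in U.
have := nth_uniq x (s := traject s x l) (i := m %% l) (j := 0).
rewrite !size_traject => /(_ rl l0 U).
rewrite !nth_traject // -permX sr /= eqxx.
by move/esym/eqP.
Qed.

Lemma conn_map (e : rel T) (f : T -> T) u v :
  (forall a b, e a b -> e (f a) (f b)) -> connect e u v -> connect e (f u) (f v).
Proof.
move=> ef /connectP[q]; elim: q u => [|w q IH] u /=; first by move=> _ ->.
by case/andP=> /ef euw /IH pq /pq; apply: connect_trans; apply: connect1.
Qed.

Lemma conn_inv (e : rel T) (P : pred T) u v :
  (forall a b, P a -> e a b -> P b) -> P u -> connect e u v -> P v.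
Proof.
move=> eP Pu /connectP[q]; elim: q u Pu => [|w q IH] u Pu /=; first by move=> _ ->.
by case/andP=> euw /(IH w (eP _ _ Pu euw)).
Qed.
End Gen.

Section L2.
Variables (T : finType) (H : {group {perm T}}) (S D : {set T}) (c : {perm T}) (p : nat).
Hypotheses (pr : prime p) (Htr : [transitive H, on S | 'P]) (cH : c \in H)
  (DS : D \subset S)
  (cfix : forall u, u \notin D -> c u = u) (cmov : forall u, u \in D -> c u != u)
  (Dorb : forall d u, d \in D -> u \in D -> exists i, u = (c ^+ i) d)
  (cp : c ^+ p = 1) (cardD : #|D| = p) (Sp : (#|S| < 2 * p)%N).

Definition e2 : rel T := fun u v =>
  [&& v \in S, v != u & (2 * #|orbit 'P 'C_H[u | 'P] v| <= #|S|)%N].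
Definition R2 u := [set v | connect e2 u v].

Lemma actS g u : g \in H -> (g u \in S) = (u \in S).
Proof.
move=> Hg; have := atrans_acts Htr; move/subsetP/(_ g Hg) => gN.
exact: (astabs_act u gN).
Qed.

Lemma orb_le g u v : g \in H ->
  (#|orbit 'P 'C_H[u | 'P] v| <= #|orbit 'P 'C_H[g u | 'P] (g v)|)%N.
Proof.
move=> Hg; rewrite -(card_imset _ (@perm_inj _ g)); apply: subset_leq_card.
apply/subsetP => _ /imsetP[w /orbitP[a Ha <-] ->].
case/setIP: Ha => Ha /astab1P au.
apply/orbitP; exists (g^-1 * a * g).
  apply/setIP; split; first by rewrite !groupM ?groupV.
  by apply/astab1P; rewrite actPE in au; rewrite actPE !permM permK au.
by rewrite !actPE !permM permK.
Qed.

Lemma orb_eq g u v : g \in H ->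
  #|orbit 'P 'C_H[g u | 'P] (g v)| = #|orbit 'P 'C_H[u | 'P] v|.
Proof.
move=> Hg; apply/eqP; rewrite eqn_leq orb_le // andbT.
by have := orb_le (g u) (g v) (groupVr Hg); rewrite !permK.
Qed.

Lemma e2_inv g u v : g \in H -> e2 (g u) (g v) = e2 u v.
Proof. by move=> Hg; rewrite /e2 actS // orb_eq // (inj_eq perm_inj). Qed.

Lemma R2_img g u : g \in H -> R2 (g u) = [set g w | w in R2 u].
Proof.
move=> Hg; apply/setP => w; rewrite inE; apply/idP/imsetP.
  move=> guw; exists (g^-1 w); last by rewrite permKV.
  rewrite inE; have := conn_map (f := g^-1) _ guw; rewrite permK; apply.
  by move=> a b; rewrite e2_inv // groupV.
case=> w' Rw' ->; move: Rw'; rewrite inE; apply: conn_map.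
by move=> a b; rewrite e2_inv.
Qed.

Lemma R2_card g u : g \in H -> #|R2 (g u)| = #|R2 u|.
Proof. by move=> Hg; rewrite R2_img // card_imset //; exact: perm_inj. Qed.

Lemma R2_S u : u \in S -> R2 u \subset S.
Proof.
move=> uS; apply/subsetP => v; rewrite inE; apply: (conn_inv (P := mem S)) => //.
by move=> a b _ /and3P[].
Qed.

Lemma R2_cardS u w : u \in S -> w \in S -> #|R2 u| = #|R2 w|.
Proof. by move=> uS wS; case: (atransP2 Htr uS wS) => a Ha ->; rewrite R2_card. Qed.

Lemma R2_eq u v : u \in S -> v \in R2 u -> R2 v = R2 u.
Proof.
move=> uS vR; have vS : v \in S by apply: (subsetP (R2_S uS)).
apply/eqP; rewrite eqEcard (R2_cardS uS vS) leqnn andbT.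
apply/subsetP => w; rewrite !inE; apply: connect_trans; by rewrite inE in vR.
Qed.

Lemma step_out a b : a \in S :\: D -> e2 a b -> b \in S :\: D.
Proof.
case/setDP => aS aD /and3P[bS _ small]; rewrite inE bS andbT.
apply/negP => bD.
have sub : D \subset orbit 'P 'C_H[a | 'P] b.
  apply/subsetP => w wD; case: (Dorb bD wD) => i ->; apply/orbitP.
  exists (c ^+ i) => //; rewrite inE groupX //=; apply/astab1P.
  exact: fixX (cfix aD).
have := subset_leq_card sub; rewrite cardD; move: small Sp; clear; lia.
Qed.

Lemma L2_big x : x \in S :\: D -> forall v, v \in S -> v != x ->
  (#|S| < 2 * #|orbit 'P 'C_H[x | 'P] v|)%N.
Proof.
move=> xSD v vS vx; rewrite ltnNge; apply/negP => small.
have exv : e2 x v by rewrite /e2 vS vx small.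
have xS : x \in S by case/setDP: xSD.
have RxSD : R2 x \subset S :\: D.
  apply/subsetP => w; rewrite inE; apply: (conn_inv (P := mem (S :\: D))) => //.
  exact: step_out.
have Rx2 : (1 < #|R2 x|)%N.
  apply/card_gt1P; exists x, v; split => //; rewrite ?inE ?connect0 ?connect1 //.
  by rewrite eq_sym.
have Rxp : (#|R2 x| < p)%N.
  have := subset_leq_card RxSD; rewrite cardsD (setIidPr DS) cardD; move: Rx2 Sp; clear; lia.
have [dl dlD] : exists dl, dl \in D.
  by apply/set0Pn; rewrite -card_gt0 cardD prime_gt0.
have dlS : dl \in S by apply: (subsetP DS).
have Rdl := R2_cardS dlS xS.
have [w [wR wd]] : exists w, w \in R2 dl /\ w != dl.
  move: Rx2; rewrite -Rdl => /card_gt1P[a [b [aR bR ab]]].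
  case: (eqVneq a dl) => [ad|]; last by exists a.
  by exists b; split => //; rewrite -ad eq_sym.
have wS : w \in S by apply: (subsetP (R2_S dlS)).
have [d [dc ddl Rd]] : exists d, [/\ d \in <[c]>, d dl != dl & R2 (d dl) = R2 dl].
  case wD: (w \in D).
    case: (Dorb dlD wD) => j wj; exists (c ^+ j); rewrite mem_cycle -wj.
    by split => //; apply: R2_eq.
  exists c; rewrite cycle_id cmov //; split => //.
  rewrite R2_img // -(R2_eq dlS wR) -R2_img // cfix ?wD //.
have dH : d \in H by apply: (subsetP _ _ dc); rewrite cycle_subG.
have Rdi : forall i, R2 ((d ^+ i) dl) = R2 dl.
  elim=> [|i IH]; first by rewrite expg0 perm1.
  by rewrite expgSr permM R2_img // IH -R2_img.
have c1 : c != 1 by apply/eqP => c1; move: (cmov dlD); rewrite c1 perm1 eqxx.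
have ordc : #[c] = p.
  have h1 : #[c] != 1%N by rewrite order_eq1.
  by apply/(prime_nt_dvdP pr h1); rewrite order_dvdn cp.
have d1 : d != 1 by apply/eqP => d1; move: ddl; rewrite d1 perm1 eqxx.
have cd : <[d]> = <[c]>.
  apply/eqP; rewrite eqEcard cycle_subG dc /= -!orderE ordc.
  have : #[d] = p.
    have h1 : #[d] != 1%N by rewrite order_eq1.
    by apply/(prime_nt_dvdP pr h1); rewrite -ordc orderE; apply: order_dvdG.
  by move=> ->.
have DR : D \subset R2 dl.
  apply/subsetP => u uD; case: (Dorb dlD uD) => k ->.
  have : c ^+ k \in <[d]> by rewrite cd mem_cycle.
  case/cycleP => i ->; rewrite -(Rdi i) inE connect0 //.
have := subset_leq_card DR; rewrite cardD Rdl => h; move: Rxp; by rewrite ltnNge h.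
Qed.

Lemma L2 x : x \in S :\: D -> [transitive 'C_H[x | 'P], on S :\ x | 'P].
Proof.
move=> xSD; have [xS xD] : x \in S /\ x \notin D by case/setDP: xSD.
have [dl dlD] : exists dl, dl \in D.
  by apply/set0Pn; rewrite -card_gt0 cardD prime_gt0.
have dlS : dl \in S by apply: (subsetP DS).
have dlx : dl != x by apply: contraNneq xD => <-.
have orbS : forall v, orbit 'P 'C_H[x | 'P] v \subset S :\ x -> True by [].
have orbsub : forall v, v \in S -> v != x -> orbit 'P 'C_H[x | 'P] v \subset S.
  move=> v vS _; apply/subsetP => _ /orbitP[a /setIP[Ha _] <-].
  by rewrite /= actS.
apply/imsetP; exists dl; first by rewrite !inE dlx.
apply/setP => w; apply/idP/idP.
  case/setD1P => wx wS.
  have := cardsUI (orbit 'P 'C_H[x | 'P] dl) (orbit 'P 'C_H[x | 'P] w).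
  have := L2_big xSD dlS dlx; have := L2_big xSD wS wx.
  have := subset_leq_card (subsetT (orbit 'P 'C_H[x | 'P] dl :|: orbit 'P 'C_H[x | 'P] w)).
  have: (#|orbit 'P 'C_H[x | 'P] dl :|: orbit 'P 'C_H[x | 'P] w| <= #|S|)%N.
    by apply: subset_leq_card; rewrite subUset !orbsub.
  move=> hU _ h1 h2 hUI.
  have : (0 < #|orbit 'P 'C_H[x | 'P] dl :&: orbit 'P 'C_H[x | 'P] w|)%N by move: hU h1 h2 hUI; clear; lia.
  rewrite card_gt0 => /set0Pn[z /setIP[zd zw]].
  have -> : orbit 'P 'C_H[x | 'P] dl = orbit 'P 'C_H[x | 'P] w.
    by move/orbit_eqP: zd => <-; move/orbit_eqP: zw => ->.
  exact: orbit_refl.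
case/orbitP => a /setIP[Ha /astab1P ax] <-; rewrite !inE !actPE actS // dlS andbT.
rewrite actPE in ax.
by apply: contra_neq dlx => adx; apply: (@perm_inj _ a); rewrite adx ax.
Qed.
End L2.

Lemma alt_from3 (T : finType) (G : {group {perm T}}) (x y z : T) :
  (4 < #|T|)%N -> x != y -> y != z -> x != z ->
  (forall a b d : T, a != b -> b != d -> a != d -> tperm a b * tperm b d \in G) ->
  'Alt_T \subset G.
Proof.
move=> T5 xy yz xz h3.
set A3 := [set s : {perm T} | [exists a, [exists b, [exists d,
   [&& a != b, b != d, a != d & s == tperm a b * tperm b d]]]]].
have A3P : forall s, reflect (exists a b d, [/\ a != b, b != d, a != d &
     s = tperm a b * tperm b d]) (s \in A3).
  move=> s; rewrite inE; apply: (iffP existsP).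
    by case=> a /existsP[b /existsP[d /and4P[? ? ? /eqP ->]]]; exists a, b, d.
  by case=> a [b [d [? ? ? ->]]]; exists a; apply/existsP; exists b;
    apply/existsP; exists d; rewrite !eqxx; apply/and4P.
have A3G : A3 \subset G.
  by apply/subsetP => s /A3P[a [b [d [ab bd ad ->]]]]; apply: h3.
have A3alt : A3 \subset 'Alt_T.
  apply/subsetP => s /A3P[a [b [d [ab bd ad ->]]]].
  by rewrite Alt_even odd_permM !odd_tperm ab bd.
have nA : 'Alt_T \subset 'N(A3).
  apply/subsetP => s _; rewrite inE; apply/subsetP => t.
  rewrite mem_conjg => /A3P[a [b [d [ab bd ad e]]]].
  apply/A3P; exists (s a), (s b), (s d).
  rewrite !(inj_eq perm_inj) ab bd ad; split => //.
  by rewrite -[t](conjgKV s) e conjMg !tpermJ.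
have nN : <<A3>> <| 'Alt_T.
  apply/andP; split; first by rewrite gen_subG.
  exact: subset_trans nA (norm_gen A3).
case/simpleP: (simple_Alt5 T5) => _ /(_ _ nN) [N1|NA].
  have : tperm x y * tperm y z \in <<A3>>.
    by apply: mem_gen; apply/A3P; exists x, y, z.
  rewrite N1 inE => /eqP/permP/(_ x).
  by rewrite permM !tpermL perm1 => /eqP; rewrite eq_sym (negPf xz).
by rewrite -NA gen_subG.
Qed.

Section Jordan.
Variables (T : finType) (G : {group {perm T}}) (D : {set T}) (c : {perm T}) (p : nat).
Hypotheses (pr : prime p) (Gtr : [transitive G, on setT | 'P]) (cG : c \in G)
  (cfix : forall u, u \notin D -> c u = u) (cmov : forall u, u \in D -> c u != u)
  (Dorb : forall d u, d \in D -> u \in D -> exists i, u = (c ^+ i) d)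
  (cp : c ^+ p = 1) (cardD : #|D| = p) (Tp : (#|T| < 2 * p)%N)
  (T3 : (p + 3 <= #|T|)%N).

Lemma stab_trans (F : {set T}) : F \subset ~: D -> [transitive 'C_G(F | 'P), on ~: F | 'P].
Proof.
elim: {F}_.+1 {-2}F (ltnSn #|F|) => // m IH F; rewrite ltnS => Fm FD.
case: (set_0Vmem F) => [-> | [x xF]].
  rewrite setC0; have -> : 'C_G(set0 | 'P) = G; last by [].
  by apply/setIidPl; apply/subsetP => a _; apply/astabP => u; rewrite inE.
set F0 := F :\ x.
have F0D : F0 \subset ~: D by apply: subset_trans FD; apply: subD1set.
have F0m : (#|F0| < m)%N.
  by move: Fm; rewrite (cardsD1 x F) xF.
have tr0 := IH F0 F0m F0D.
have xD : x \notin D by have := subsetP FD x xF; rewrite inE.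
have cH : c \in 'C_G(F0 | 'P).
  apply/setIP; split => //; apply/astabP => u uF0; rewrite actPE cfix //.
  by have := subsetP F0D u uF0; rewrite inE.
have DS : D \subset ~: F0.
  apply/subsetP => u uD; rewrite inE; apply/negP => uF0.
  by have := subsetP F0D u uF0; rewrite inE uD.
have Sp : (#|~: F0| < 2 * p)%N by apply: leq_ltn_trans Tp; apply: max_card.
have xS : x \in ~: F0 :\: D by rewrite !inE xD eqxx.
have := L2 pr tr0 cH DS cfix cmov Dorb cp cardD Sp xS.
have -> : 'C_('C_G(F0 | 'P))[x | 'P] = 'C_G(F | 'P).
  by rewrite -setIA -astabU setUC setD1K.
have -> : ~: F0 :\ x = ~: F.
  by apply/setP => u; rewrite !inE; case: (eqVneq u x) => [->|]; rewrite ?xF.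
by [].
Qed.

Lemma keepC (F : {set T}) h u : h \in 'C(F | 'P) -> (h u \in F) = (u \in F).
Proof.
move=> hC; case uF: (u \in F); first by rewrite -[h u]actPE (astab_act hC uF).
apply/negP => huF; have := astab_act hC huF; rewrite !actPE => /perm_inj e.
by move: huF; rewrite e uF.
Qed.

Lemma three_trans (F0 : {set T}) x y z :
  x |: (y |: (z |: F0)) \subset ~: D ->
  x \notin F0 -> y \notin F0 -> z \notin F0 -> x != y -> y != z -> x != z ->
  forall a b d, a \notin F0 -> b \notin F0 -> d \notin F0 ->
  a != b -> b != d -> a != d ->
  exists2 h, h \in 'C_G(F0 | 'P) & [/\ h x = a, h y = b & h z = d].
Proof.
move=> sD xF yF zF xy yz xz a b d aF bF dF ab bd ad.
set F1 := x |: F0; set F2 := y |: F1.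
have sub : forall E : {set T}, E \subset x |: (y |: (z |: F0)) -> E \subset ~: D.
  by move=> E sE; apply: (subset_trans sE sD).
have tr0 : [transitive 'C_G(F0 | 'P), on ~: F0 | 'P].
  by apply/stab_trans/sub/subsetP => u uF; rewrite !inE uF !orbT.
have tr1 : [transitive 'C_G(F1 | 'P), on ~: F1 | 'P].
  by apply/stab_trans/sub/subsetP => u; rewrite !inE; case/orP => ->; rewrite ?orbT.
have tr2 : [transitive 'C_G(F2 | 'P), on ~: F2 | 'P].
  by apply/stab_trans/sub/subsetP => u; rewrite !inE; case/or3P => ->; rewrite ?orbT.
have C0 : forall h, h \in 'C_G(F0 | 'P) -> h \in G /\ h \in 'C(F0 | 'P).
  by move=> h /setIP.
have xS0 : x \in ~: F0 by rewrite inE.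
have aS0 : a \in ~: F0 by rewrite inE.
have [h3 h3C ah3] := atransP2 tr0 xS0 aS0.
rewrite actPE in ah3.
have [h3G h3F] := C0 _ h3C.
set b' := h3^-1 b.
have b'F : b' \notin F0 by rewrite /b' keepC // groupV.
have b'x : b' != x by apply: contra_neq ab => e; rewrite ah3 -e /b' permKV.
have yS1 : y \in ~: F1 by rewrite !inE negb_or eq_sym xy.
have bS1 : b' \in ~: F1 by rewrite !inE negb_or b'x.
have [h2 h2C bh2] := atransP2 tr1 yS1 bS1.
rewrite actPE in bh2.
case/setIP: h2C => h2G h2F1.
have h2F : h2 \in 'C(F0 | 'P) by apply: (subsetP (astabS _ (subsetUr _ _))) h2F1.
have h2x : h2 x = x by rewrite -[h2 x]actPE (astab_act h2F1) // !inE eqxx.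
set d'' := h2^-1 (h3^-1 d).
have d''F : d'' \notin F0 by rewrite /d'' !keepC // groupV.
have d''x : d'' != x.
  apply: contra_neq ad => e; rewrite ah3 -[x]h2x -e /d'' !permKV //.
have d''y : d'' != y.
  apply: contra_neq bd => e.
  by rewrite -[b](permKV h3) -/b' bh2 -e /d'' !permKV.
have zS2 : z \in ~: F2 by rewrite !inE !negb_or eq_sym yz eq_sym xz zF.
have dS2 : d'' \in ~: F2 by rewrite !inE !negb_or d''x d''y.
have [h1 h1C dh1] := atransP2 tr2 zS2 dS2.
rewrite actPE in dh1.
case/setIP: h1C => h1G h1F2.
have h1F : h1 \in 'C(F0 | 'P).
  by apply: (subsetP (astabS _ _)) h1F2; apply/subsetP => u uF; rewrite !inE uF !orbT.
have h1x : h1 x = x by rewrite -[h1 x]actPE (astab_act h1F2) // !inE eqxx orbT.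
have h1y : h1 y = y by rewrite -[h1 y]actPE (astab_act h1F2) // !inE eqxx.
exists (h1 * h2 * h3).
  by rewrite inE !groupM //=; apply/andP; split; rewrite ?groupM.
rewrite !permM h1x h2x h1y -bh2 -ah3 -dh1; split => //.
  by rewrite /b' permKV.
by rewrite /d'' !permKV.
Qed.

Lemma logfact : logn p (#|T|`!) = 1%N.
Proof.
have p0 : (0 < p)%N by apply: prime_gt0.
rewrite logn_fact // big_ltn; last by move: T3; clear; lia.
rewrite expn1 big_nat_cond big1 => [|k /andP[/andP[k2 _] _]].
  apply/eqP; rewrite addn0 eqn_leq -ltnS ltn_divLR // leq_divRL //.
  by rewrite mul1n; apply/andP; split; move: T3 Tp; clear; lia.
apply: divn_small; apply: (leq_trans Tp).
apply: (@leq_trans (p ^ 2)); last by apply: leq_pexp2l.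
have p2 := prime_gt1 pr.
by rewrite expnS expn1 leq_mul2r p2 orbT.
Qed.

Lemma ordp (q : {perm T}) : q ^+ p = 1 -> q != 1 -> #[q] = p.
Proof.
move=> qp q1; have h1 : #[q] != 1%N by rewrite order_eq1.
by apply/(prime_nt_dvdP pr h1); rewrite order_dvdn qp.
Qed.

Lemma sylc (K : {group {perm T}}) (q : {perm T}) :
  q \in K -> q ^+ p = 1 -> q != 1 -> p.-Sylow(K) <[q]>.
Proof.
move=> qK qp q1; have oq := ordp qp q1.
rewrite pHallE cycle_subG qK /= -orderE oq p_part.
suff -> : logn p #|K| = 1%N by rewrite expn1.
apply/eqP; rewrite eqn_leq; apply/andP; split.
  rewrite -logfact; apply: dvdn_leq_log; first exact: fact_gt0.
  by rewrite -card_Sym; apply: cardSg; apply: subsetT.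
by rewrite logn_gt0 mem_primes pr cardG_gt0 -oq order_dvdG.
Qed.

Lemma c1 : c != 1.
Proof.
have [dl dlD] : exists dl, dl \in D.
  by apply/set0Pn; rewrite -card_gt0 cardD prime_gt0.
by apply/eqP => c1; move: (cmov dlD); rewrite c1 perm1 eqxx.
Qed.

Lemma adjust g : g \in G -> (forall u, u \in ~: D -> g^-1 u \in ~: D) ->
  exists2 k, k \in 'C_G(~: D | 'P) & c ^ (g * k^-1) \in <[c]>.
Proof.
move=> gG gD; set K := 'C_G(~: D | 'P).
have cK : c \in K.
  apply/setIP; split => //; apply/astabP => u; rewrite inE actPE; exact: cfix.
have cgK : c ^ g \in K.
  apply/setIP; split; first by rewrite groupJ.
  apply/astabP => u uD; rewrite actPE conjgE !permM cfix ?permKV //.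
  by have := gD u uD; rewrite inE.
have sylP := sylc cK cp c1.
have sylQ : p.-Sylow(K) <[c ^ g]>.
  apply: sylc cgK _ _; first by rewrite -conjXg cp conj1g.
  by rewrite conjg_eq1 c1.
have [k kK e] := Sylow_trans sylP sylQ.
exists k => //; have : c ^ g \in <[c ^ g]> := cycle_id _.
by rewrite e mem_conjg conjgM.
Qed.

Lemma jordan : 'Alt_T \subset G.
Proof.
have p2 := prime_gt1 pr.
have cC : #|~: D| = (#|T| - p)%N by rewrite -cardD -(cardsC D) addKn.
have [x xG] : exists x, x \in ~: D.
  by apply/set0Pn; rewrite -card_gt0 cC; move: T3; clear; lia.
have [y yG] : exists y, y \in ~: D :\ x.
  apply/set0Pn; rewrite -card_gt0; move: (cardsD1 x (~: D)); rewrite xG cC.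
  by move: T3; clear; lia.
have [z zG] : exists z, z \in ~: D :\ x :\ y.
  apply/set0Pn; rewrite -card_gt0; move: (cardsD1 y (~: D :\ x)).
  rewrite yG; move: (cardsD1 x (~: D)); rewrite xG cC.
  by move: T3; clear; lia.
case/setD1P: yG => yx yG; case/setD1P: zG => zy /setD1P[zx zG].
have xy : x != y by rewrite eq_sym.
have yz : y != z by rewrite eq_sym.
have xz : x != z by rewrite eq_sym.
set Gm := ~: D :\ x :\ y :\ z.
have xF : x \notin Gm by rewrite /Gm !inE eqxx /= ?andbF.
have yF : y \notin Gm by rewrite /Gm !inE eqxx /= ?andbF.
have zF : z \notin Gm by rewrite /Gm !inE eqxx /= ?andbF.
have sD : x |: (y |: (z |: Gm)) \subset ~: D.
  apply/subsetP => u; rewrite !inE; case/or4P => [/eqP->|/eqP->|/eqP->|/and4P[]] //.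
    by rewrite inE in xG.
  by rewrite inE in yG.
  by rewrite inE in zG.
have [g1 g1C [g1x g1y g1z]] := three_trans sD xF yF zF xy yz xz yF xF zF yx xz yz.
have [g2 g2C [g2x g2y g2z]] := three_trans sD xF yF zF xy yz xz xF zF yF xz zy xy.
have invv : forall (g : {perm T}) u v, g u = v -> g^-1 v = u.
  by move=> g u v <-; rewrite permK.
have GmD : forall u, u \in Gm -> u \in ~: D.
  by move=> u; rewrite /Gm !inE => /and4P[].
have caseG : forall u, u \in ~: D -> [\/ u = x, u = y, u = z | u \in Gm].
  move=> u uG; case: (eqVneq u x) => [->|ux]; first by constructor 1.
  case: (eqVneq u y) => [->|uy]; first by constructor 2.
  case: (eqVneq u z) => [->|uz]; first by constructor 3.
  by constructor 4; rewrite /Gm !inE ux uy uz; rewrite inE in uG.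
have fixGm : forall g : {perm T}, g \in 'C(Gm | 'P) -> forall u, u \in Gm -> g u = u.
  by move=> g gC u uG; rewrite -[g u]actPE (astab_act gC uG).
have adj : forall g : {perm T}, g \in 'C_G(Gm | 'P) ->
   g x \in ~: D -> g y \in ~: D -> g z \in ~: D ->
   g^-1 x \in ~: D -> g^-1 y \in ~: D -> g^-1 z \in ~: D ->
   exists h : {perm T}, [/\ h \in G, c ^ h \in <[c]>,
     (forall u, u \in ~: D -> h u = g u) & (forall u, u \in ~: D -> h^-1 u = g^-1 u)].
  move=> g /setIP[gG gC] gx gy gz gix giy giz.
  have giC : g^-1 \in 'C(Gm | 'P) by rewrite groupV.
  have gD : forall u, u \in ~: D -> g u \in ~: D.
    by move=> u /caseG[->|->|->|uG] //; rewrite fixGm // GmD.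
  have giD : forall u, u \in ~: D -> g^-1 u \in ~: D.
    by move=> u /caseG[->|->|->|uG] //; rewrite fixGm // GmD.
  have [k /setIP[kG kC] ck] := adjust gG giD.
  have kiC : k^-1 \in 'C(~: D | 'P) by rewrite groupV.
  exists (g * k^-1); split => //.
  - by rewrite groupM ?groupV.
  - by move=> u uD; rewrite permM; have := astab_act kiC (gD u uD); rewrite actPE.
  - move=> u uD; rewrite invMg invgK permM; congr (g^-1 _).
    by have := astab_act kC uD; rewrite actPE.
have [h1 [h1G ch1 h1v h1iv]] : exists h : {perm T}, [/\ h \in G, c ^ h \in <[c]>,
     (forall u, u \in ~: D -> h u = g1 u) & (forall u, u \in ~: D -> h^-1 u = g1^-1 u)].
  apply: adj => //; rewrite ?g1x ?g1y ?g1z ?(invv _ _ _ g1x) ?(invv _ _ _ g1y) ?(invv _ _ _ g1z) //.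
have [h2 [h2G ch2 h2v h2iv]] : exists h : {perm T}, [/\ h \in G, c ^ h \in <[c]>,
     (forall u, u \in ~: D -> h u = g2 u) & (forall u, u \in ~: D -> h^-1 u = g2^-1 u)].
  apply: adj => //; rewrite ?g2x ?g2y ?g2z ?(invv _ _ _ g2x) ?(invv _ _ _ g2y) ?(invv _ _ _ g2z) //.
have xD := xG.
have yD := yG.
have zD := zG.
case/setIP: g1C => _ g1C; case/setIP: g2C => _ g2C.
have g1iC : g1^-1 \in 'C(Gm | 'P) by rewrite groupV.
have g2iC : g2^-1 \in 'C(Gm | 'P) by rewrite groupV.
have [a1 ea1] : exists a, c ^ h1 = c ^+ a by apply/cycleP.
have [a2 ea2] : exists a, c ^ h2 = c ^+ a by apply/cycleP.
set w := h1 * h2 * h1^-1 * h2^-1.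
have wG : w \in G by rewrite !groupM ?groupV.
have cw : commute c w.
  have E12 : c ^ (h1 * h2) = c ^+ (a2 * a1) by rewrite conjgM ea1 conjXg ea2 expgM.
  have E21 : c ^ (h2 * h1) = c ^+ (a1 * a2) by rewrite conjgM ea2 conjXg ea1 expgM.
  have ew : w = (h1 * h2) * (h2 * h1)^-1 by rewrite invMg !mulgA.
  apply/commgP/conjg_fixP.
  by rewrite ew conjgM E12 mulnC -E21 conjgK.
have wv : forall u, w u = h2^-1 (h1^-1 (h2 (h1 u))) by move=> u; rewrite !permM.
have wx : w x = y.
  rewrite wv h1v // g1x h2v // g2y h1iv // (invv _ _ _ g1z) h2iv //.
  exact: (invv _ _ _ g2y).
have wy : w y = z.
  rewrite wv h1v // g1y h2v // g2x h1iv // (invv _ _ _ g1y) h2iv //.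
  exact: (invv _ _ _ g2z).
have wz : w z = x.
  rewrite wv h1v // g1z h2v // g2z h1iv // (invv _ _ _ g1x) h2iv //.
  exact: (invv _ _ _ g2x).
have wGm : forall u, u \in Gm -> w u = u.
  move=> u uG; have uD := GmD u uG.
  by rewrite wv h1v // (fixGm _ g1C) // h2v // (fixGm _ g2C) // h1iv //
    (fixGm _ g1iC) // h2iv // (fixGm _ g2iC).
have cwu : forall u, c (w u) = w (c u).
  by move=> u; rewrite -!permM cw.
have wD : forall u, u \in D -> w u \in D.
  move=> u uD; case wuD : (w u \in D) => //.
  have := cwu u; rewrite (@cfix (w u)) ?wuD // => /perm_inj e.
  by move: (cmov uD); rewrite -e eqxx.
have [dl dlD] : exists dl, dl \in D.
  by apply/set0Pn; rewrite -card_gt0 cardD prime_gt0.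
have [j ej] := Dorb dlD (wD _ dlD).
have wcj : forall u, u \in D -> w u = (c ^+ j) u.
  move=> u uD; have [i ->] := Dorb dlD uD.
  have cwi : commute w (c ^+ i) by apply: commuteX; apply: commute_sym.
  by rewrite -permM -cwi permM ej -permM -expgD addnC expgD permM.
have wiD : forall i u, u \in D -> (w ^+ i) u = ((c ^+ j) ^+ i) u.
  elim=> [|i IH] u uD; first by rewrite !expg0.
  by rewrite expgS permM (IH _ (wD u uD)) (wcj u uD) expgS permM.
have wpD : forall u, u \in D -> (w ^+ p) u = u.
  by move=> u uD; rewrite wiD // -expgM mulnC expgM cp expg1n perm1.
have w3 : forall u, u = x \/ u = y \/ u = z -> (w ^+ 3) u = u.
  by move=> u [->|[->|->]]; rewrite permX /= ?(wx, wy, wz).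
have p3 : (p * p) %% 3 = 1%N.
  have p3gt : (3 < p)%N by move: T3 Tp; clear; lia.
  have nd : ~~ (3 %| p).
    apply/negP => /(prime_nt_dvdP pr (isT : 3 != 1%N)) e.
    by move: p3gt; rewrite -e.
  rewrite -modnMm; move: nd; rewrite /dvdn.
  have := ltn_pmod p (isT : 0 < 3)%N.
  by case: (p %% 3) => [|[|[|]]].
set t := w ^+ (p * p).
have tG : t \in G by rewrite groupX.
have ep : (p * p = 3 * ((p * p) %/ 3) + 1)%N by rewrite {1}(divn_eq (p * p) 3) p3 mulnC.
have txyz : forall u, u = x \/ u = y \/ u = z -> t u = w u.
  by move=> u h; rewrite /t ep expgD expgM permM (fixX _ (w3 u h)) expg1.
have ht : t = tperm x z * tperm z y.
  apply/permP => u; rewrite permM.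
  case: (eqVneq u x) => [->|ux].
    by rewrite txyz; [rewrite wx !tpermL | left].
  case: (eqVneq u y) => [->|uy].
    rewrite txyz; last by right; left.
    by rewrite wy (tpermD xy) ?tpermR // eq_sym.
  case: (eqVneq u z) => [->|uz].
    rewrite txyz; last by right; right.
    by rewrite wz tpermR (tpermD zx yx).
  have xu : x != u by rewrite eq_sym.
  have yu : y != u by rewrite eq_sym.
  have zu : z != u by rewrite eq_sym.
  rewrite (tpermD xu zu) (tpermD zu yu).
  case uD : (u \in D).
    by rewrite /t expgM (fixX _ (wpD u uD)).
  have uG : u \in Gm by rewrite /Gm !inE ux uy uz uD.
  by rewrite /t (fixX _ (wGm u uG)).
have sD0 : x |: (y |: (z |: set0)) \subset ~: D.
  by apply/subsetP => u; rewrite !inE => /or4P[] // /eqP->; rewrite -in_setC.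
have all3 : forall a b d : T, a != b -> b != d -> a != d -> tperm a b * tperm b d \in G.
  move=> a b d ab bd ad.
  have n0 : forall v : T, v \notin (set0 : {set T}) by move=> v; rewrite inE.
  have db : d != b by rewrite eq_sym.
  have [h /setIP[hG _] [hx hy hz]] :=
    three_trans sD0 (n0 x) (n0 y) (n0 z) xy yz xz (n0 a) (n0 d) (n0 b) ad db ab.
  by rewrite -hx -hy -hz -!tpermJ -conjMg -ht groupJ.
apply: alt_from3 xy yz xz all3.
by move: T3 p2; clear; lia.
Qed.
End Jordan.



Section PCyc.
Variables (T : finType) (s : {perm T}) (x0 : T) (p : nat).
Hypotheses (pr : prime p) (hx0 : #|porbit s x0| = p) (Tp : (#|T| < 2 * p)%N).
Let D := porbit s x0.
Let k := (#|T| - p)`!.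
Let c := s ^+ k.

Lemma pndvd : ~~ (p %| k).
Proof.
apply/negP => pk.
have : (0 < logn p k)%N by rewrite logn_gt0 mem_primes pr fact_gt0.
rewrite /k logn_fact // big_nat_cond big1 // => i /andP[/andP[i1 _] _].
apply: divn_small; apply: (@leq_trans p); first by move: Tp; clear; lia.
by rewrite -{1}(expn1 p) leq_pexp2l // prime_gt0.
Qed.

Lemma inD u : u \in D -> porbit s u = D.
Proof. by move=> uD; apply/eqP; rewrite eq_porbit_mem. Qed.

Lemma cfix0 u : u \notin D -> c u = u.
Proof.
move=> uD.
have sub : porbit s u \subset ~: D.
  apply/subsetP => v vu; rewrite inE; apply: contra uD => vD.
  by rewrite -(inD vD) porbit_sym.
have l0 : (0 < #|porbit s u|)%N by rewrite lt0n card_porbit_neq0.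
have lk : (#|porbit s u| %| k)%N.
  apply: dvdn_fact; rewrite l0 /=.
  have := subset_leq_card sub; rewrite -[#|~: D|](addKn #|D|) cardsC /D hx0.
  by move=> h; apply: (leq_trans h); rewrite leq_sub2r.
rewrite /c -(divnK lk) mulnC expgM; apply: fixX.
by rewrite permX iter_porbit.
Qed.

Lemma cp0 : c ^+ p = 1.
Proof.
apply/permP => u; rewrite perm1.
case uD: (u \in D).
  rewrite /c -expgM mulnC expgM; apply: fixX.
  by rewrite permX -hx0 -/D -(inD uD) iter_porbit.
by apply: fixX; apply: cfix0; rewrite uD.
Qed.

Lemma cmov0 u : u \in D -> c u != u.
Proof.
move=> uD; apply/negP => /eqP e.
have := ORB e; rewrite (inD uD) hx0 => pk.
by move: pndvd; rewrite pk.
Qed.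

Lemma Dorb0 d u : d \in D -> u \in D -> exists i, u = (c ^+ i) d.
Proof.
move=> dD uD.
have l1 : #|porbit c d| = p.
  have h1 : #|porbit c d| != 1%N.
    apply/negP => /eqP e; move: (cmov0 dD).
    by have := iter_porbit c d; rewrite e /= => ->; rewrite eqxx.
  apply/(prime_nt_dvdP pr h1); apply: ORB.
  by rewrite cp0 perm1.
have sub : porbit c d \subset D.
  apply/subsetP => v /porbitP[i ->].
  by rewrite /c -expgM -(inD dD) mem_porbit.
have e : porbit c d = D by apply/eqP; rewrite eqEcard sub l1 /D hx0 leqnn.
by apply/porbitP; rewrite e.
Qed.
End PCyc.

Lemma setE3 (T : finType) (A : {set T}) (P Q R : pred T) :
  (forall s, s \in A -> Q s = R s) ->
  [set s in A | P s && Q s] = [set s in A | P s] :\: [set s in A | P s && ~~ R s].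
Proof.
move=> QR; apply/setP => s; rewrite !inE.
case sA: (s \in A) => //=; rewrite QR //.
by case: (P s); case: (R s).
Qed.

Theorem corollary5p3 (n p : nat) (pi : {perm 'I_n}) (C : {set {perm 'I_n}}) :
  prime p -> n < 2 * p -> p <= n - 3 ->
  pi \in 'Alt_('I_n) ->
  (exists x : 'I_n, #|porbit pi x| = p) ->
  C \in classes [set: {perm 'I_n}] ->
  #|[set s in 'Alt_('I_n) | ([~ pi, s] \in C) && (<<[set pi; s]>> == 'Alt_('I_n))]|
  = (#|[set s in 'Alt_('I_n) | [~ pi, s] \in C]|
     - #|[set s in 'Alt_('I_n) | ([~ pi, s] \in C) &&
            ~~ [transitive <<[set pi; s]>>, on [set: 'I_n] | 'P]]|)%N.
Proof.
move=> pr np pn3 piA [x0 hx0] _.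
have Tp : (#|'I_n| < 2 * p)%N by rewrite card_ord.
have p2 := prime_gt1 pr.
have T3 : (p + 3 <= #|'I_n|)%N by rewrite card_ord; move: pn3 p2; clear; lia.
have key : forall s, s \in 'Alt_('I_n) ->
    (<<[set pi; s]>> == 'Alt_('I_n)) = [transitive <<[set pi; s]>>, on [set: 'I_n] | 'P].
  move=> s sA; apply/eqP/idP.
    move=> ->; apply: (ntransitive1 (m := n.-2)).
      by move: pn3 p2; clear; lia.
    by have := Alt_trans 'I_n; rewrite card_ord.
  move=> tr; apply/eqP; rewrite eqEsubset; apply/andP; split.
    by rewrite gen_subG; apply/subsetP => u; rewrite in_set2 => /orP[]/eqP->.
  apply: (jordan (G := <<[set pi; s]>>%G) (D := porbit pi x0) (c := pi ^+ (#|'I_n| - p)`!) pr tr) => //.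
  - by rewrite groupX // mem_gen // set21.
  - exact: cfix0 hx0.
  - exact: cmov0 hx0 Tp.
  - exact: Dorb0 pr hx0 Tp.
  - exact: cp0 hx0.
have Dsub : [set s in 'Alt_('I_n) | ([~ pi, s] \in C) &&
            ~~ [transitive <<[set pi; s]>>, on [set: 'I_n] | 'P]]
       \subset [set s in 'Alt_('I_n) | [~ pi, s] \in C].
  by apply/subsetP => s; rewrite !inE => /andP[-> /andP[-> _]].
have E := @setE3 _ _ (fun s => [~ pi, s] \in C) _ _ key.
by rewrite E cardsD (setIidPr Dsub).
Qed.
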